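(* If $(X,\delta)$ is an $L_1$-embeddable diversity with induced metric $d(a,b)=\delta(\{a,b\})$, then for every finite $A=\{a_1,\dots,a_k\}\subseteq X$ (with $a_i$ distinct), \[ (|A|-1)\,\delta(A)\le\sum_{1\le i<j\le k}d(a_i,a_j). \]
   Context: A diversity on a set $X$ is a function $\delta$ from finite subsets of $X$ to $\mathbb{R}$ with $\delta(A)\ge 0$, $\delta(A)=0$ whenever $|A|\le 1$ (values $0$ on larger sets are allowed), and $\delta(A\cup B)+\delta(B\cup C)\ge\delta(A\cup C)$ for all finite $A,B,C$ with $B\neq\emptyset$. For a measure space $(\Omega,\mathcal{A},\mu)$, the $L_1$ diversity is $(L_1(\Omega,\mu),\delta_1)$ with $\delta_1(F)=\int_\Omega\max\{|f(\omega)-g(\omega)|:f,g\in F\}\,d\mu(\omega)$ for finite $F$. A diversity $(X,\delta)$ is $L_1$-embeddable if there is a map $\phi$ from $X$ into some $L_1$ diversity with $\delta_1(\phi(A))=\delta(A)$ for all finite $A\subseteq X$. *)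

(* Defs.v *)
From HB Require Import structures.
From mathcomp Require Import all_boot all_order all_algebra.
From mathcomp Require Import finmap.
From mathcomp Require Import all_classical all_reals all_analysis.

Set Implicit Arguments.
Unset Strict Implicit.
Unset Printing Implicit Defensive.

Import Order.TTheory GRing.Theory Num.Theory.
Local Open Scope ring_scope.

Definition is_diversity (R : realType) (X : choiceType) (delta : {fset X} -> R) : Prop :=
  [/\ (forall A : {fset X}, 0 <= delta A),
      (forall A : {fset X}, (#|` A| <= 1)%N -> delta A = 0) &
      (forall A B C : {fset X}, B != fset0 ->
          delta (fsetU A C) <= delta (fsetU A B) + delta (fsetU B C))].

(* The L1 diversity value of phi(A), where phi maps X into L1(T, mu):
   delta_1(phi(A)) = \int max_{f,g in phi(A)} |f - g| dmu
                  = \int max_{a,b in A} |phi a w - phi b w| dmu(w). *)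
Definition L1_div_image (R : realType) (d : measure_display) (T : measurableType d)
    (mu : {measure set T -> \bar R}) (X : choiceType) (phi : X -> T -> R)
    (A : {fset X}) : \bar R :=
  (\int[mu]_(w in [set: T])
     ((\big[Num.max/0]_(a <- A) \big[Num.max/0]_(b <- A) `|phi a w - phi b w|)%:E))%E.

Definition L1_embeddable (R : realType) (X : choiceType) (delta : {fset X} -> R) : Prop :=
  exists (d : measure_display) (T : measurableType d)
         (mu : {measure set T -> \bar R}) (phi : X -> T -> R),
    (forall x : X, mu.-integrable [set: T] (EFin \o phi x)) /\
    (forall A : {fset X}, L1_div_image mu phi A = (delta A)%:E).

(* Main.v *)
Require Import Defs.
From HB Require Import structures.
From mathcomp Require Import all_boot all_order all_algebra.
From mathcomp Require Import finmap.
From mathcomp Require Import all_classical all_reals all_analysis.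
From mathcomp Require Import lra.

Import Order.TTheory GRing.Theory Num.Theory.
Local Open Scope ring_scope.

Lemma two_le_sum (R : realDomainType) k (g : 'I_k -> R) p q :
  p != q -> (forall i, 0 <= g i) -> g p + g q <= \sum_i g i.
Proof.
move=> npq g0; rewrite (bigD1 p) //= (bigD1 q) /=; last by rewrite eq_sym.
rewrite addrA lerDl; apply: sumr_ge0 => i _; exact: g0.
Qed.

Lemma pointwise (R : realFieldType) k (x : 'I_k -> R) p q :
  (k%:R - 1) * `|x p - x q| <= \sum_(i < k) \sum_(j < k | (i < j)%N) `|x i - x j|.
Proof.
set f := fun i j => `|x i - x j|.
set S := \sum_(i < k) _.
have S0 : 0 <= S by apply: sumr_ge0 => i _; apply: sumr_ge0.
have S2 : S + S = \sum_i \sum_j f i j.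
  have -> : S = \sum_(i < k) \sum_(j < k) (if (i < j)%N then f i j else 0).
    by apply: eq_bigr => i _; rewrite big_mkcond.
  rewrite [X in _ + X]exchange_big -big_split /=; apply: eq_bigr => i _.
  rewrite -big_split /=; apply: eq_bigr => j _.
  case: ltngtP => h; rewrite ?addr0 ?add0r //.
    by rewrite /f distrC.
  have -> : i = j by apply: val_inj.
  by rewrite /f subrr normr0.
have [epq|npq] := eqVneq p q.
  by rewrite epq subrr normr0 mulr0.
set d := `|x p - x q|.
have row : forall i, d <= \sum_j f i j.
  move=> i; apply: (le_trans _ (@two_le_sum _ _ (f i) _ _ npq _)).
    by rewrite /f /d (distrC (x i)); apply: ler_distD.
  by move=> j; rewrite /f.
have hpq : \sum_(j < k) d <= \sum_j f p j + \sum_j f q j.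
  rewrite -big_split /=; apply: ler_sum => j _.
  by rewrite /f /d (distrC (x q) (x j)); apply: ler_distD.
rewrite sumr_const card_ord -mulr_natl in hpq.
have hr : (\sum_j f p j - d) + (\sum_j f q j - d) <= \sum_i (\sum_j f i j - d).
  by apply: two_le_sum => // i; rewrite subr_ge0.
rewrite sumrB sumr_const card_ord -mulr_natl in hr.
rewrite mulrBl mul1r; lra.
Qed.

Lemma bigmax_ub (R : realDomainType) (T : eqType) (s : seq T) (F : T -> R) x :
  x \in s -> F x <= \big[Num.max/0]_(y <- s) F y.
Proof.
elim: s => [|y s IH] //; rewrite inE big_cons le_max => /orP[/eqP->|/IH->].
  by rewrite lexx.
by rewrite orbT.
Qed.

Lemma mbig (d : measure_display) (T : measurableType d) (R : realType) (I : Type)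
   (s : seq I) (h : I -> T -> R) :
  (forall i, measurable_fun setT (h i)) ->
  measurable_fun setT (fun w => \big[Num.max/0]_(i <- s) h i w).
Proof.
move=> mh; elim: s => [|i s IH].
  under eq_fun do rewrite big_nil; exact: measurable_cst.
under eq_fun do rewrite big_cons.
exact: (measurable_realfun.measurable_maxr (mh i) IH).
Qed.

Theorem proposition6 (R : realType) (X : choiceType) (delta : {fset X} -> R)
  (hdiv : is_diversity delta) (hemb : L1_embeddable delta)
  (k : nat) (a : 'I_k -> X) (ha : injective a) :
  (k%:R - 1) * delta [fset a i | i in 'I_k]%fset
    <= \sum_(i < k) \sum_(j < k | (i < j)%N) delta [fset a i; a j]%fset.
Proof.
case: hdiv => d0 _ _.
case: k a ha => [|k'] a ha.
  by rewrite big_ord0 sub0r mulN1r oppr_le0.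
case: hemb => dd [T [mu [phi [hint hdel]]]].
set Gf := fun (s : seq X) w =>
  \big[Num.max/0]_(u <- s) \big[Num.max/0]_(v <- s) `|phi u w - phi v w|.
have hdel' : forall A : {fset X},
    (\int[mu]_(w in [set: T]) (Gf A w)%:E)%E = (delta A)%:E := hdel.
have mphi : forall x, measurable_fun setT (phi x).
  by move=> x; apply/measurable_realfun.measurable_EFinP; exact: measurable_int (hint x).
have mG : forall s, measurable_fun setT (Gf s).
  move=> s; apply: mbig => u; apply: mbig => v.
  apply: measurableT_comp => //; exact: measurable_realfun.measurable_funB.
have G0 : forall s w, 0 <= Gf s w.
  move=> s w; apply: (big_ind (fun x : R => 0 <= x)) => //; first by move=> x y hx hy; rewrite le_max hx.
  move=> u _; apply: (big_ind (fun x : R => 0 <= x)) => //; first by move=> x y hx hy; rewrite le_max hx.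
set A := [fset a i | i in 'I_k'.+1]%fset.
set K := k'.+1%:R : R.
have K1 : 0 <= K - 1 by rewrite subr_ge0 /K ler1n.
suff: (((K - 1) * delta A)%:E <=
   (\sum_(i < k'.+1) \sum_(j < k'.+1 | (i < j)%N) delta [fset a i; a j]%fset)%:E)%E
  by rewrite lee_fin.
rewrite -sumEFin; under eq_bigr => i _ do rewrite -sumEFin.
rewrite EFinM -hdel'.
under eq_bigr => i _ do under eq_bigr => j _ do rewrite -hdel'.
set H := fun (p : 'I_k'.+1 * 'I_k'.+1) w =>
  ((if (p.1 < p.2)%N then Gf [fset a p.1; a p.2]%fset w else 0)%:E)%E.
have -> : (\sum_(i < k'.+1) \sum_(j < k'.+1 | (i < j)%N)
    (\int[mu]_(w in [set: T]) (Gf [fset a i; a j]%fset w)%:E)%E)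
   = (\int[mu]_(w in [set: T]) \sum_(p : 'I_k'.+1 * 'I_k'.+1) H p w)%E.
  rewrite ge0_integral_sum //; last 2 first.
  - move=> p; apply/measurable_realfun.measurable_EFinP; rewrite /H /=.
    case: (p.1 < p.2)%N; [exact: mG | exact: measurable_cst].
  - by move=> p w _; rewrite /H lee_fin; case: ifP.
  have -> : (\sum_(p : 'I_k'.+1 * 'I_k'.+1) \int[mu]_(w in [set: T]) H p w
     = \sum_(i < k'.+1) \sum_(j < k'.+1) \int[mu]_(w in [set: T]) H (i, j) w)%E.
    by rewrite pair_big; apply: eq_bigr => -[i j].
  apply: eq_bigr => i _; rewrite big_mkcond /=; apply: eq_bigr => j _.
  rewrite /H /=; case: ifP => _ //.
  by rewrite integral0_eq.
rewrite -ge0_integralZl_EFin //; last 2 first.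
- by move=> w _; rewrite lee_fin.
- exact/measurable_realfun.measurable_EFinP.
apply: ge0_le_integral => //.
- by move=> w _; rewrite -EFinM lee_fin mulr_ge0.
- under eq_fun do rewrite -EFinM; apply/measurable_realfun.measurable_EFinP.
  exact: measurable_realfun.measurable_funM (measurable_cst _) (mG _).
- apply: emeasurable_sum => p; apply/measurable_realfun.measurable_EFinP; rewrite /H /=.
  case: (p.1 < p.2)%N; [exact: mG | exact: measurable_cst].
move=> w _; rewrite /H sumEFin -EFinM lee_fin.
set y := fun i => phi (a i) w.
apply: (@le_trans _ _ (\sum_(i < k'.+1) \sum_(j < k'.+1 | (i < j)%N) `|y i - y j|)).
  rewrite /Gf big_seq_cond; apply: (big_ind (fun v : R => (K - 1) * v <= \sum_(i < k'.+1) \sum_(j < k'.+1 | (i < j)%N) `|y i - y j|)).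
  - by rewrite mulr0; apply: sumr_ge0 => i _; apply: sumr_ge0.
  - by move=> x1 x2 h1 h2; rewrite /Order.max; case: ifP.
  move=> u /andP[/imfsetP[p _ ->] _].
  rewrite big_seq_cond; apply: (big_ind (fun v : R => (K - 1) * v <= \sum_(i < k'.+1) \sum_(j < k'.+1 | (i < j)%N) `|y i - y j|)).
  - by rewrite mulr0; apply: sumr_ge0 => i _; apply: sumr_ge0.
  - by move=> x1 x2 h1 h2; rewrite /Order.max; case: ifP.
  move=> v /andP[/imfsetP[q _ ->] _].
  exact: pointwise.
have -> : \sum_(p : 'I_k'.+1 * 'I_k'.+1) (if (p.1 < p.2)%N then Gf [fset a p.1; a p.2]%fset w else 0)
  = \sum_(i < k'.+1) \sum_(j < k'.+1) (if (i < j)%N then Gf [fset a i; a j]%fset w else 0).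
  by rewrite pair_big; apply: eq_bigr => -[i j].
apply: ler_sum => i _; rewrite big_mkcond /=; apply: ler_sum => j _.
case: ifP => // _.
apply: (@le_trans _ _ (\big[Num.max/0]_(v <- [fset a i; a j]%fset) `|phi (a i) w - phi v w|)).
  by apply: (@bigmax_ub _ _ _ (fun v => `|phi (a i) w - phi v w|) (a j)); rewrite !inE eqxx orbT.
by apply: (@bigmax_ub _ _ _ (fun u => \big[Num.max/0]_(v <- [fset a i; a j]%fset) `|phi u w - phi v w|) (a i)); rewrite !inE eqxx.
Qed.
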